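(* Let $G$ be a finite connected simple graph, $H$ a finite tree, and $\Delta$ a triangulation of $G\times H$. Then every Cartier divisor on $\Delta$ is linearly equivalent (i.e. differs by a principal divisor) to a Cartier divisor that vanishes on every diagonal edge of $\Delta$. The same holds with the roles of $G$ and $H$ exchanged.
   Context: Triangulated product: $\Delta$ has vertex set $V(G)\times V(H)$; horizontal edges $\{(a,b),(x,b)\}$ ($ax\in E(G)$, $b\in V(H)$); vertical edges $\{(a,b),(a,y)\}$ ($a\in V(G)$, $by\in E(H)$); for each $ax\in E(G)$, $by\in E(H)$ the square $(a,b),(x,b),(x,y),(a,y)$ is split by one chosen diagonal edge into two triangles. For a triangle $\sigma$, $\mathrm{diag}(\sigma)$ is its diagonal edge. $\alpha(e,v)=1$ if $v\in e$, $e$ diagonal; $\alpha(e,v)=|\{\text{triangles }\sigma\supset e: v\notin\mathrm{diag}(\sigma)\}|$ if $v\in e$, $e$ not diagonal; $0$ if $v\notin e$. For $\phi:V(\Delta)\to\mathbb{Z}$, $\operatorname{Div}(\phi)=\sum_{r}\big(\sum_{\sigma\supset r}\phi(\sigma\setminus r)-\sum_{u\in r}\alpha(r,u)\phi(u)\big)[r]$; principal divisors are those of this form. A divisor $D$ on $\Delta$ (formal $\mathbb{Z}$-combination of edges) is Cartier if for every vertex $v$ some $\phi$ satisfies $D(r)=\operatorname{Div}(\phi)(r)$ for all edges $r\ni v$. *)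

(* Defs.v *)
From HB Require Import structures.
From mathcomp Require Import all_boot all_order all_algebra.
Set Implicit Arguments. Unset Strict Implicit. Unset Printing Implicit Defensive.
Import Order.TTheory GRing.Theory Num.Theory.
Local Open Scope ring_scope.

Definition simple_graph (X : finType) (r : rel X) : Prop :=
  symmetric r /\ irreflexive r.

Definition connected_graph (X : finType) (r : rel X) : Prop :=
  (0 < #|X|)%N /\ forall x y : X, connect r x y.

Definition tree (X : finType) (r : rel X) : Prop :=
  connected_graph r /\
  forall s : seq X, uniq s -> (2 < size s)%N -> ~~ cycle r s.

Section TriangulatedProduct.
Variables (T U : finType) (e : rel T) (f : rel U).
Variable Dg : rel (T * U).

(* Dg is a triangulation of the product G x H: it is symmetric, only joins
   opposite corners of squares, and each square {a,x} x {b,y} gets exactly one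
   of its two diagonals. *)
Definition triangulation : Prop :=
  [/\ symmetric Dg,
      (forall u v, Dg u v -> e u.1 v.1 && f u.2 v.2) &
      (forall a x b y, e a x -> f b y -> Dg (a, b) (x, y) = ~~ Dg (x, b) (a, y))].

Definition adjD (u v : T * U) : bool :=
  [|| (u.2 == v.2) && e u.1 v.1, (u.1 == v.1) && f u.2 v.2 | Dg u v].

Definition is_edge (r : {set T * U}) : bool :=
  [exists u, exists v, adjD u v && (r == [set u; v])].

Definition is_diag (r : {set T * U}) : bool :=
  [exists u, exists v, Dg u v && (r == [set u; v])].

(* The two triangles of the square (a,b),(x,b),(x,y),(a,y) split by the
   diagonal {(a,b),(x,y)}. *)
Definition is_triangle (s : {set T * U}) : bool :=
  [exists a, exists x, exists b, exists y,
    [&& e a x, f b y, Dg (a, b) (x, y) &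
        (s == [set (a, b); (x, y); (x, b)]) || (s == [set (a, b); (x, y); (a, y)])]].

Definition diag_of (s : {set T * U}) : {set T * U} :=
  [set u in s | [exists w in s, Dg u w]].

Definition alpha (r : {set T * U}) (v : T * U) : int :=
  if v \notin r then 0
  else if is_diag r then 1
  else (#|[set s | is_triangle s && (r \subset s) && (v \notin diag_of s)]|)%:Z.

(* Div(phi)(r); phi(sigma \ r) is written as the sum of phi over the
   (one-element) set sigma :\: r. *)
Definition Div (phi : T * U -> int) (r : {set T * U}) : int :=
  if is_edge r then
    \sum_(s | is_triangle s && (r \subset s)) \sum_(w in s :\: r) phi w
    - \sum_(u in r) alpha r u * phi u
  else 0.

Definition is_divisor (D : {set T * U} -> int) : Prop :=
  forall r, ~~ is_edge r -> D r = 0.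

Definition principal (D : {set T * U} -> int) : Prop :=
  exists phi : T * U -> int, forall r, D r = Div phi r.

Definition lin_equiv (D D' : {set T * U} -> int) : Prop :=
  principal (fun r => D r - D' r).

Definition cartier (D : {set T * U} -> int) : Prop :=
  forall v : T * U, exists phi : T * U -> int,
    forall r, is_edge r -> v \in r -> D r = Div phi r.

Definition vanishes_on_diagonals (D : {set T * U} -> int) : Prop :=
  forall r, is_diag r -> D r = 0.

End TriangulatedProduct.

(* Main.v *)
Require Import Defs.
From HB Require Import structures.
From mathcomp Require Import all_boot all_order all_algebra ring zify.
From Stdlib Require Import IndefiniteDescription.
Set Implicit Arguments. Unset Strict Implicit. Unset Printing Implicit Defensive.
Import Order.TTheory GRing.Theory Num.Theory.
Local Open Scope ring_scope.


Lemma Div_nondiag (T U : finType) (e : rel T) (f : rel U) (Dg : rel (T * U))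
  (phi : T * U -> int) (r : {set T * U}) :
  is_edge e f Dg r -> ~~ is_diag Dg r ->
  Div e f Dg phi r = \sum_(s | is_triangle e f Dg s && (r \subset s))
     (\sum_(w in s :\: r) phi w - \sum_(u in r) (u \notin diag_of Dg s)%:R * phi u).
Proof.
move=> he hd; rewrite /Div he sumrB; congr (_ - _).
rewrite exchange_big /=.
apply: eq_bigr => u ur; rewrite /alpha ur (negbTE hd) /=.
rewrite -mulr_suml; congr (_ * _).
rewrite -sum1_card; rewrite -natz natr_sum big_mkcond [RHS]big_mkcond /=.
apply: eq_bigr => s _; rewrite inE.
case: (is_triangle e f Dg s && (r \subset s)) => //=; by case: (u \notin _).
Qed.

Lemma Div_diag (T U : finType) (e : rel T) (f : rel U) (Dg : rel (T * U))
  (phi : T * U -> int) (r : {set T * U}) :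
  is_edge e f Dg r -> is_diag Dg r ->
  Div e f Dg phi r = \sum_(s | is_triangle e f Dg s && (r \subset s))
     (\sum_(w in s :\: r) phi w) - \sum_(u in r) phi u.
Proof.
move=> he hd; rewrite /Div he; congr (_ - _).
by apply: eq_bigr => u ur; rewrite /alpha ur hd mul1r.
Qed.


Ltac bash := repeat match goal with
 | H : is_true (_ || _) |- _ => case/orP: H => H
 | H : is_true (_ && _) |- _ => let H' := fresh "H" in case/andP: H => H H'
 | H : is_true ((_,_) == (_,_)) |- _ => rewrite xpair_eqE in H
 | H : is_true (_ == _) |- _ => move/eqP: H => H; subst
 end.

Ltac setperm := apply/setP => ?; rewrite !inE; by do ![case: (_ == _)].

Lemma tri_horiz (T U : finType) (e : rel T) (f : rel U) (Dg : rel (T * U)) a x b s :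
  simple_graph e -> simple_graph f -> triangulation e f Dg -> e a x ->
  (is_triangle e f Dg s && ([set (a,b);(x,b)] \subset s)) =
  (s \in [set (if Dg (a,b) (x,y) then [set (a,b);(x,y);(x,b)] else [set (x,b);(a,y);(a,b)])
          | y in [set y | f b y]]).
Proof.
move=> [es ei] [fs fi] [Ds Dgef Dfl] eax.
have nax : a != x by apply: contraTneq eax => ->; rewrite ei.
apply/idP/idP.
- case/andP=> /existsP[a' /existsP[x' /existsP[b' /existsP[y' H]]]] /subsetP sub.
  case/and4P: H => ea fb D0 H.
  have ea' : e x' a' by rewrite es.
  have fb' : f y' b' by rewrite fs.
  have D0s : Dg (x', y') (a', b') by rewrite Ds.
  have fl : Dg (x', b') (a', y') = false by rewrite (Dfl _ _ _ _ ea' fb) D0.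
  have fls : Dg (a', y') (x', b') = false by rewrite Ds fl.
  have h1 : (a,b) \in s by apply: sub; rewrite !inE eqxx.
  have h2 : (x,b) \in s by apply: sub; rewrite !inE eqxx ?orbT.
  case/orP: H => /eqP Es; subst s; apply/imsetP; [exists y' | exists b'];
  rewrite !inE !xpair_eqE in h1 h2; bash;
  rewrite ?eqxx ?ei ?fi // in nax ea fb ea' fb' *; rewrite ?inE // ?D0 ?fl ?D0s ?fls; setperm.
- case/imsetP => y; rewrite inE => fby ->.
  case: ifP => hD.
  + rewrite /is_triangle; apply/andP; split.
      apply/existsP; exists a; apply/existsP; exists x; apply/existsP; exists b; apply/existsP; exists y.
      by rewrite eax fby hD eqxx.
    apply/subsetP => z; rewrite !inE; by case/orP => ->; rewrite ?orbT.
  + have hD' : Dg (x,b) (a,y) by rewrite (Dfl _ _ _ _ _ fby) ?hD // es.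
    rewrite /is_triangle; apply/andP; split.
      apply/existsP; exists x; apply/existsP; exists a; apply/existsP; exists b; apply/existsP; exists y.
      by rewrite es eax fby hD' eqxx.
    apply/subsetP => z; rewrite !inE; by case/orP => ->; rewrite ?orbT.
Qed.

Lemma tri_vert (T U : finType) (e : rel T) (f : rel U) (Dg : rel (T * U)) a b y s :
  simple_graph e -> simple_graph f -> triangulation e f Dg -> f b y ->
  (is_triangle e f Dg s && ([set (a,b);(a,y)] \subset s)) =
  (s \in [set (if Dg (a,b) (x,y) then [set (a,b);(x,y);(a,y)] else [set (x,b);(a,y);(a,b)])
          | x in [set x | e a x]]).
Proof.
move=> [es ei] [fs fi] [Ds Dgef Dfl] fby.
have nby : b != y by apply: contraTneq fby => ->; rewrite fi.
apply/idP/idP.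
- case/andP=> /existsP[a' /existsP[x' /existsP[b' /existsP[y' H]]]] /subsetP sub.
  case/and4P: H => ea fb D0 H.
  have ea' : e x' a' by rewrite es.
  have fb' : f y' b' by rewrite fs.
  have D0s : Dg (x', y') (a', b') by rewrite Ds.
  have fl : Dg (x', b') (a', y') = false by rewrite (Dfl _ _ _ _ ea' fb) D0.
  have fls : Dg (a', y') (x', b') = false by rewrite Ds fl.
  have h1 : (a,b) \in s by apply: sub; rewrite !inE eqxx.
  have h2 : (a,y) \in s by apply: sub; rewrite !inE eqxx ?orbT.
  case/orP: H => /eqP Es; subst s; apply/imsetP; [exists a' | exists x'];
  rewrite !inE !xpair_eqE in h1 h2; bash;
  rewrite ?eqxx ?ei ?fi // in nby ea fb ea' fb' *; rewrite ?inE // ?D0 ?fl ?D0s ?fls; setperm.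
- case/imsetP => x; rewrite inE => eax ->.
  case: ifP => hD.
  + rewrite /is_triangle; apply/andP; split.
      apply/existsP; exists a; apply/existsP; exists x; apply/existsP; exists b; apply/existsP; exists y.
      by rewrite eax fby hD eqxx orbT.
    apply/subsetP => z; rewrite !inE; by case/orP => ->; rewrite ?orbT.
  + have hD' : Dg (x,b) (a,y) by rewrite (Dfl _ _ _ _ _ fby) ?hD // es.
    rewrite /is_triangle; apply/andP; split.
      apply/existsP; exists x; apply/existsP; exists a; apply/existsP; exists b; apply/existsP; exists y.
      by rewrite es eax fby hD' eqxx.
    apply/subsetP => z; rewrite !inE; by case/orP => ->; rewrite ?orbT.
Qed.

Lemma tri_diag (T U : finType) (e : rel T) (f : rel U) (Dg : rel (T * U)) a x b y s :
  simple_graph e -> simple_graph f -> triangulation e f Dg -> e a x -> f b y ->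
  Dg (a,b) (x,y) ->
  (is_triangle e f Dg s && ([set (a,b);(x,y)] \subset s)) =
  (s \in [set [set (a,b);(x,y);(x,b)]; [set (a,b);(x,y);(a,y)]]).
Proof.
move=> [es ei] [fs fi] [Ds Dgef Dfl] eax fby D.
have nby : b != y by apply: contraTneq fby => ->; rewrite fi.
have nax : a != x by apply: contraTneq eax => ->; rewrite ei.
apply/idP/idP.
- case/andP=> /existsP[a' /existsP[x' /existsP[b' /existsP[y' H]]]] /subsetP sub.
  case/and4P: H => ea fb D0 H.
  have ea' : e x' a' by rewrite es.
  have fb' : f y' b' by rewrite fs.
  have D0s : Dg (x', y') (a', b') by rewrite Ds.
  have fl : Dg (x', b') (a', y') = false by rewrite (Dfl _ _ _ _ ea' fb) D0.
  have fls : Dg (a', y') (x', b') = false by rewrite Ds fl.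
  have h1 : (a,b) \in s by apply: sub; rewrite !inE eqxx.
  have h2 : (x,y) \in s by apply: sub; rewrite !inE eqxx ?orbT.
  case/orP: H => /eqP Es; subst s;
  rewrite !inE !xpair_eqE in h1 h2; bash;
  rewrite ?eqxx ?ei ?fi // ?D0 ?fl ?D0s ?fls in nby nax ea fb ea' fb' D *; rewrite !inE;
  apply/orP; first [left; apply/eqP; setperm | right; apply/eqP; setperm].
- rewrite !inE; case/orP => /eqP ->; (apply/andP; split; last first;
     [apply/subsetP => z; rewrite !inE; by case/orP => ->; rewrite ?orbT|]);
    apply/existsP; exists a; apply/existsP; exists x; apply/existsP; exists b; apply/existsP; exists y;
    by rewrite eax fby D eqxx ?orbT.
Qed.


Lemma ex3 (X : finType) (P : pred X) p1 p2 p3 :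
  [exists w in [set p1; p2; p3], P w] = [|| P p1, P p2 | P p3].
Proof.
apply/existsP/idP => [[w /andP[]]|].
  by rewrite !inE => H HP; bash; rewrite HP ?orbT.
by move=> H; bash; [exists p1|exists p2|exists p3]; rewrite !inE eqxx ?orbT.
Qed.

Lemma setU1D (X : finType) (w : X) (r : {set X}) : w \notin r -> (w |: r) :\: r = [set w].
Proof.
move=> wr; apply/setP => z; rewrite !inE.
case: (z =P w) => [->|] //=; first by rewrite wr.
by move=> _; case: (z \in r).
Qed.

Lemma DgF1 (T U : finType) (e : rel T) (f : rel U) (Dg : rel (T * U)) :
  simple_graph e -> triangulation e f Dg -> forall a b y, Dg (a,b) (a,y) = false.
Proof.
move=> [_ ei] [_ Dgef _] a b y; apply/negbTE/negP => /Dgef /andP [/=]; by rewrite ei.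
Qed.

Lemma DgF2 (T U : finType) (e : rel T) (f : rel U) (Dg : rel (T * U)) :
  simple_graph f -> triangulation e f Dg -> forall a b x, Dg (a,b) (x,b) = false.
Proof.
move=> [_ fi] [_ Dgef _] a b x; apply/negbTE/negP => /Dgef /andP [_ /=]; by rewrite fi.
Qed.

Lemma edge_adj (T U : finType) (e : rel T) (f : rel U) (Dg : rel (T * U)) u v :
  adjD e f Dg u v -> is_edge e f Dg [set u; v].
Proof. by move=> h; apply/existsP; exists u; apply/existsP; exists v; rewrite h eqxx. Qed.

Lemma nodiag_horiz (T U : finType) (e : rel T) (f : rel U) (Dg : rel (T * U)) a x b :
  simple_graph f -> triangulation e f Dg -> ~~ is_diag Dg [set (a,b); (x,b)].
Proof.
move=> hf ht; apply/existsP => [[u /existsP [v /andP [D /eqP E]]]].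
have hu : u \in [set (a,b);(x,b)] by rewrite E !inE eqxx.
have hv : v \in [set (a,b);(x,b)] by rewrite E !inE eqxx orbT.
by move: hu hv D; rewrite !inE => /orP[]/eqP-> /orP[]/eqP->; rewrite (DgF2 hf ht).
Qed.

Lemma nodiag_vert (T U : finType) (e : rel T) (f : rel U) (Dg : rel (T * U)) a b y :
  simple_graph e -> triangulation e f Dg -> ~~ is_diag Dg [set (a,b); (a,y)].
Proof.
move=> hf ht; apply/existsP => [[u /existsP [v /andP [D /eqP E]]]].
have hu : u \in [set (a,b);(a,y)] by rewrite E !inE eqxx.
have hv : v \in [set (a,b);(a,y)] by rewrite E !inE eqxx orbT.
by move: hu hv D; rewrite !inE => /orP[]/eqP-> /orP[]/eqP->; rewrite (DgF1 hf ht).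
Qed.

Lemma Div_horiz (T U : finType) (e : rel T) (f : rel U) (Dg : rel (T * U)) phi a x b :
  simple_graph e -> simple_graph f -> triangulation e f Dg -> e a x ->
  Div e f Dg phi [set (a,b); (x,b)] =
  \sum_(y | f b y) (if Dg (a,b) (x,y) then phi (x,y) - phi (x,b) else phi (a,y) - phi (a,b)).
Proof.
move=> he hf ht eax.
have [es ei] := he; have [fs fi] := hf; have [Ds Dgef Dfl] := ht.
have nax : (a == x) = false by apply/negbTE; apply: contraTneq eax => ->; rewrite ei.
have nxa : (x == a) = false by rewrite eq_sym.
rewrite Div_nondiag; last exact: nodiag_horiz hf ht; last by apply: edge_adj; rewrite /adjD /= eqxx eax.
rewrite (eq_bigl _ _ (fun s => tri_horiz b s he hf ht eax)) big_imset /=; last first.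
  move=> y1 y2; rewrite !inE => f1 f2 E.
  have nb1 : (y1 == b) = false by apply/negbTE; apply: contraTneq f1 => ->; rewrite fi.
  have /setP/(_ (x,y1)) := E; have /setP/(_ (a,y1)) := E.
  case: ifP => _; case: ifP => _; rewrite !inE !xpair_eqE !eqxx /= ?nb1 ?nax ?nxa /= ?orbF ?andbF //=;
  first [by move=> _ /esym/eqP | by move=> /esym/eqP].
apply: eq_big => [y|y]; first by rewrite inE.
rewrite inE => fby.
have nyb : (y == b) = false by apply/negbTE; apply: contraTneq fby => ->; rewrite fi.
have nby : (b == y) = false by rewrite eq_sym.
have nab : (a, b) \notin [set (x, b)] by rewrite !inE xpair_eqE nax.
rewrite big_setU1 //= big_set1.
case: ifP => hD.
- rewrite {1}(_ : [set (a, b); (x, y); (x, b)] = (x,y) |: [set (a,b); (x,b)]); last by setperm.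
  rewrite setU1D; last by rewrite !inE !xpair_eqE nyb !andbF.
  rewrite big_set1.
  rewrite /diag_of !inE !ex3 !xpair_eqE !eqxx ?nax ?nxa ?nyb ?nby /= ?(DgF1 he ht) ?(DgF2 hf ht) hD /=.
  ring.
- have hD' : Dg (x,b) (a,y) by rewrite (Dfl _ _ _ _ _ fby) ?hD // es.
  rewrite {1}(_ : [set (x, b); (a, y); (a, b)] = (a,y) |: [set (a,b); (x,b)]); last by setperm.
  rewrite setU1D; last by rewrite !inE !xpair_eqE nyb !andbF.
  rewrite big_set1.
  rewrite /diag_of !inE !ex3 !xpair_eqE !eqxx ?nax ?nxa ?nyb ?nby /= ?(DgF1 he ht) ?(DgF2 hf ht) hD' /=.
  ring.
Qed.

Lemma Div_vert (T U : finType) (e : rel T) (f : rel U) (Dg : rel (T * U)) phi a b y :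
  simple_graph e -> simple_graph f -> triangulation e f Dg -> f b y ->
  Div e f Dg phi [set (a,b); (a,y)] =
  \sum_(x | e a x) (if Dg (a,b) (x,y) then phi (x,y) - phi (a,y) else phi (x,b) - phi (a,b)).
Proof.
move=> he hf ht fby.
have [es ei] := he; have [fs fi] := hf; have [Ds Dgef Dfl] := ht.
have nby : (b == y) = false by apply/negbTE; apply: contraTneq fby => ->; rewrite fi.
have nyb : (y == b) = false by rewrite eq_sym.
rewrite Div_nondiag; last exact: nodiag_vert he ht; last by apply: edge_adj; rewrite /adjD /= eqxx fby orbT.
rewrite (eq_bigl _ _ (fun s => tri_vert a s he hf ht fby)) big_imset /=; last first.
  move=> x1 x2; rewrite !inE => e1 e2 E.
  have na1 : (x1 == a) = false by apply/negbTE; apply: contraTneq e1 => ->; rewrite ei.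
  have /setP/(_ (x1,y)) := E; have /setP/(_ (x1,b)) := E.
  case: ifP => _; case: ifP => _; rewrite !inE !xpair_eqE !eqxx /= ?na1 ?nby ?nyb /= ?orbF ?andbF ?andbT //=;
  first [by move=> _ /esym/eqP | by move=> /esym/eqP].
apply: eq_big => [x|x]; first by rewrite inE.
rewrite inE => eax.
have nax : (a == x) = false by apply/negbTE; apply: contraTneq eax => ->; rewrite ei.
have nxa : (x == a) = false by rewrite eq_sym.
have nab : (a, b) \notin [set (a, y)] by rewrite !inE xpair_eqE nby andbF.
rewrite big_setU1 //= big_set1.
case: ifP => hD.
- rewrite {1}(_ : [set (a, b); (x, y); (a, y)] = (x,y) |: [set (a,b); (a,y)]); last by setperm.
  rewrite setU1D; last by rewrite !inE !xpair_eqE nxa !andFb.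
  rewrite big_set1.
  rewrite /diag_of !inE !ex3 !xpair_eqE !eqxx ?nax ?nxa ?nyb ?nby /= ?(DgF1 he ht) ?(DgF2 hf ht) hD /=.
  ring.
- have hD' : Dg (x,b) (a,y) by rewrite (Dfl _ _ _ _ _ fby) ?hD // es.
  rewrite {1}(_ : [set (x, b); (a, y); (a, b)] = (x,b) |: [set (a,b); (a,y)]); last by setperm.
  rewrite setU1D; last by rewrite !inE !xpair_eqE nxa !andFb.
  rewrite big_set1.
  rewrite /diag_of !inE !ex3 !xpair_eqE !eqxx ?nax ?nxa ?nyb ?nby /= ?(DgF1 he ht) ?(DgF2 hf ht) /=.
  have -> : Dg (a, y) (x, b) by rewrite Ds.
  rewrite /=; ring.
Qed.

Lemma Div_diagval (T U : finType) (e : rel T) (f : rel U) (Dg : rel (T * U)) phi a x b y :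
  simple_graph e -> simple_graph f -> triangulation e f Dg -> e a x -> f b y -> Dg (a,b) (x,y) ->
  Div e f Dg phi [set (a,b); (x,y)] = phi (x,b) + phi (a,y) - phi (a,b) - phi (x,y).
Proof.
move=> he hf ht eax fby hD.
have [es ei] := he; have [fs fi] := hf; have [Ds Dgef Dfl] := ht.
have nby : (b == y) = false by apply/negbTE; apply: contraTneq fby => ->; rewrite fi.
have nyb : (y == b) = false by rewrite eq_sym.
have nax : (a == x) = false by apply/negbTE; apply: contraTneq eax => ->; rewrite ei.
have nxa : (x == a) = false by rewrite eq_sym.
have hdiag : is_diag Dg [set (a,b); (x,y)].
  by apply/existsP; exists (a,b); apply/existsP; exists (x,y); rewrite hD eqxx.
rewrite Div_diag //; last by apply: edge_adj; rewrite /adjD /= hD !orbT.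
rewrite (eq_bigl _ _ (fun s => tri_diag s he hf ht eax fby hD)).
rewrite big_setU1 /=; last first.
  apply/negP; rewrite inE => /eqP/setP/(_ (x,b)); rewrite !inE !xpair_eqE !eqxx nxa nby ?andbF //=.
rewrite big_set1.
rewrite {1}(_ : [set (a, b); (x, y); (x, b)] = (x,b) |: [set (a,b); (x,y)]); last by setperm.
rewrite {1}(_ : [set (a, b); (x, y); (a, y)] = (a,y) |: [set (a,b); (x,y)]); last by setperm.
rewrite !setU1D; try by rewrite !inE !xpair_eqE ?nax ?nxa ?nyb ?nby ?andbF ?andFb.
rewrite !big_set1 big_setU1 /= ?big_set1; last by rewrite !inE xpair_eqE nax.
ring.
Qed.


Definition fr (U : finType) (f : rel U) (b y : U) : rel U :=
  [rel u v | f u v && ~~ (((u == b) && (v == y)) || ((u == y) && (v == b)))].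

Lemma notinC (U : finType) (f : rel U) :
  irreflexive f ->
  (forall s : seq U, uniq s -> (2 < size s)%N -> ~~ cycle f s) ->
  forall b y, f b y -> ~~ connect (fr f b y) y b.
Proof.
move=> fi facyc b y fby; apply/negP => /connectP [p pp].
case/shortenP: pp => p' pp' up' _ lp.
have nby : b != y by apply: contraTneq fby => ->; rewrite fi.
case: p' pp' up' lp => [|c [|c' q]] pp' up' lp.
- by move: nby; rewrite lp eqxx.
- by move: lp pp' => /= <-; rewrite /= /fr /= !eqxx /= orbT andbF.
- apply: (negP (facyc _ up' _)) => //.
  rewrite /cycle rcons_path -lp fby andbT.
  by apply: sub_path pp' => u v /andP[].
Qed.

Lemma boundary (U : finType) (f : rel U) b y c z :
  connect (fr f b y) y c -> f c z -> ~~ connect (fr f b y) y z ->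
  ((c == b) && (z == y)) || ((c == y) && (z == b)).
Proof.
move=> hc fcz; apply: contraNT => H; apply: connect_trans hc (connect1 _).
by rewrite /fr /= fcz H.
Qed.

Lemma sameside (U : finType) (f : rel U) p1 p2 b0 y0 z :
  symmetric f -> f b0 y0 -> ~~ (((p1 == b0) && (p2 == y0)) || ((p1 == y0) && (p2 == b0))) ->
  connect (fr f p1 p2) z y0 = connect (fr f p1 p2) z b0.
Proof.
move=> fs fby H.
have h1 : fr f p1 p2 b0 y0.
  rewrite /fr /= fby /=; apply: contra H.
  by case/orP => /andP[/eqP-> /eqP->]; rewrite !eqxx ?orbT.
have h2 : fr f p1 p2 y0 b0.
  rewrite /fr /= fs fby /=; apply: contra H.
  by case/orP => /andP[/eqP-> /eqP->]; rewrite !eqxx ?orbT.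
by apply/idP/idP => h; apply: connect_trans h (connect1 _).
Qed.


Definition wf (T U : finType) (Dg : rel (T * U)) (d : T * U -> T * U -> int) c z a x : int :=
  if Dg (a,c) (x,z) then d (a,c) (x,z) else - d (x,c) (a,z).

Definition Pf (T U : finType) (f : rel U) (pL : T -> U -> T * U -> int) c a : int :=
  \sum_(z | f c z) (pL a c (a,z) - pL a c (a,c)).

Definition HS (T U : finType) (f : rel U) (Dg : rel (T * U)) a x c (p : T * U -> int) : int :=
  \sum_(y | f c y) (if Dg (a,c) (x,y) then p (x,y) - p (x,c) else p (a,y) - p (a,c)).

Lemma H1 (T U : finType) (e : rel T) (f : rel U) (Dg : rel (T * U)) d pL :
  (forall a x b y, e a x -> f b y -> Dg (a,b) (x,y) = ~~ Dg (x,b) (a,y)) ->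
  symmetric e ->
  (forall a x b y, e a x -> f b y -> Dg (a,b) (x,y) ->
     d (a,b) (x,y) = pL a b (x,b) + pL a b (a,y) - pL a b (a,b) - pL a b (x,y)) ->
  (forall a x c, e a x -> HS f Dg a x c (pL a c) = HS f Dg a x c (pL x c)) ->
  forall a x c, e a x -> Pf f pL c a - Pf f pL c x = \sum_(z | f c z) wf Dg d c z a x.
Proof.
move=> Dfl es hdiag hhor a x c eax.
have E1 : HS f Dg a x c (pL a c) = Pf f pL c a - \sum_(z | f c z) (if Dg (a,c) (x,z) then d (a,c) (x,z) else 0).
  rewrite /Pf -sumrB; apply: eq_bigr => z fcz.
  case: ifP => hD; last by rewrite subr0.
  rewrite (hdiag _ _ _ _ eax fcz hD); ring.
have E2 : HS f Dg a x c (pL x c) = Pf f pL c x - \sum_(z | f c z) (if Dg (a,c) (x,z) then 0 else d (x,c) (a,z)).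
  rewrite /Pf -sumrB; apply: eq_bigr => z fcz.
  case: ifP => hD; first by rewrite subr0.
  have hD' : Dg (x,c) (a,z) by rewrite -[Dg (x, c) (a, z)]negbK -(Dfl _ _ _ _ eax fcz) hD.
  have exa : e x a by rewrite es.
  rewrite (hdiag _ _ _ _ exa fcz hD'); ring.
have E3 : \sum_(z | f c z) wf Dg d c z a x =
   \sum_(z | f c z) (if Dg (a,c) (x,z) then d (a,c) (x,z) else 0) -
   \sum_(z | f c z) (if Dg (a,c) (x,z) then 0 else d (x,c) (a,z)).
  rewrite -sumrB; apply: eq_bigr => z _; rewrite /wf; case: ifP => _; ring.
have := hhor a x c eax; rewrite E1 E2 E3; lia.
Qed.

Lemma Wanti (T U : finType) (e : rel T) (f : rel U) (Dg : rel (T * U)) d :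
  (forall a x b y, e a x -> f b y -> Dg (a,b) (x,y) = ~~ Dg (x,b) (a,y)) ->
  symmetric f -> symmetric Dg -> (forall p q, d p q = d q p) ->
  forall a x c z, e a x -> f c z -> wf Dg d z c a x = - wf Dg d c z a x.
Proof.
move=> Dfl fs Ds dsym a x c z eax fcz.
have fzc : f z c by rewrite fs.
rewrite /wf (Dfl _ _ _ _ eax fzc) (Ds (x,z)).
case: (Dg (a,c) (x,z)) => /=; rewrite ?opprK ?(dsym (x,z)) ?(dsym (a,z)) //.
Qed.

Definition Cs (U : finType) (f : rel U) b y : {set U} := [set c | connect (fr f b y) y c].

Definition Gf (T U : finType) (f : rel U) (pL : T -> U -> T * U -> int) b y a : int :=
  \sum_(c in Cs f b y) Pf f pL c a.

Lemma sum_anti (X : finType) (G : X -> X -> int) :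
  (forall c z, G z c = - G c z) -> \sum_c \sum_z G c z = 0.
Proof.
move=> H.
have E : \sum_c \sum_z G c z = - \sum_c \sum_z G c z.
  rewrite {1}exchange_big -sumrN; apply: eq_bigr => z _.
  rewrite -sumrN; apply: eq_bigr => c _; exact: H.
lia.
Qed.

Lemma H2 (T U : finType) (e : rel T) (f : rel U) (Dg : rel (T * U)) d pL :
  (forall a x b y, e a x -> f b y -> Dg (a,b) (x,y) = ~~ Dg (x,b) (a,y)) ->
  symmetric e -> symmetric f -> irreflexive f ->
  (forall s : seq U, uniq s -> (2 < size s)%N -> ~~ cycle f s) ->
  symmetric Dg -> (forall p q, d p q = d q p) ->
  (forall a x b y, e a x -> f b y -> Dg (a,b) (x,y) ->
     d (a,b) (x,y) = pL a b (x,b) + pL a b (a,y) - pL a b (a,b) - pL a b (x,y)) ->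
  (forall a x c, e a x -> HS f Dg a x c (pL a c) = HS f Dg a x c (pL x c)) ->
  forall b y a x, f b y -> e a x -> Gf f pL b y a - Gf f pL b y x = wf Dg d y b a x.
Proof.
move=> Dfl es fs fi facyc Ds dsym hdiag hhor b y a x fby eax.
have nbC : b \notin Cs f b y by rewrite inE; exact: notinC.
have yC : y \in Cs f b y by rewrite inE connect0.
have nyb : (y == b) = false by apply/negbTE; apply: contraTneq fby => ->; rewrite fi.
have bd : forall c z, c \in Cs f b y -> f c z -> z \notin Cs f b y -> (c == y) && (z == b).
  move=> c z cC fcz zC; have := cC; have := zC; rewrite !inE => zC' cC'.
  case/orP: (boundary cC' fcz zC') => /andP[/eqP ec zy]; last by rewrite ec eqxx zy.
  by move: cC; rewrite ec (negbTE nbC).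
rewrite /Gf -sumrB.
under eq_bigr => c _ do rewrite (H1 Dfl es hdiag hhor c eax).
set F := fun c z => wf Dg d c z a x.
set C := Cs f b y.
rewrite (eq_bigr (fun c => \sum_(z | f c z && (z \in C)) F c z + \sum_(z | f c z && (z \notin C)) F c z)); last first.
  by move=> c _; rewrite (bigID (fun z => z \in C)).
rewrite big_split /=.
have A0 : \sum_(c in C) \sum_(z | f c z && (z \in C)) F c z = 0.
  rewrite -[RHS](@sum_anti _ (fun c z => if (c \in C) && (f c z && (z \in C)) then F c z else 0)).
    rewrite big_mkcond /=; apply: eq_bigr => c _.
    case: (c \in C) => /=; last by rewrite big1.
    by rewrite big_mkcond.
  move=> c z.
  have -> : (z \in C) && (f z c && (c \in C)) = (c \in C) && (f c z && (z \in C)).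
    by rewrite fs; case: (c \in C); case: (z \in C); case: (f c z).
  case: ifP => /andP => [[_ /andP[fcz _]]|_]; last by rewrite oppr0.
  exact: (Wanti Dfl fs Ds dsym eax fcz).
have B : \sum_(c in C) \sum_(z | f c z && (z \notin C)) F c z = F y b.
  rewrite (bigD1 y) //= [X in _ + X]big1 ?addr0.
    apply: big_pred1 => z; apply/idP/eqP.
      by case/andP => fyz zC; case/andP: (bd _ _ yC fyz zC) => _ /eqP.
    by move=> ->; rewrite fs fby nbC.
  move=> c /andP[cC ncy]; apply: big1 => z /andP[fcz zC].
  by move: (bd _ _ cC fcz zC); rewrite (negbTE ncy).
by rewrite A0 B add0r.
Qed.

Definition posr (U : finType) (b y : U) : bool := (enum_rank b < enum_rank y)%N.

Lemma core (T U : finType) (e : rel T) (f : rel U) (Dg : rel (T * U)) d pL :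
  (forall a x b y, e a x -> f b y -> Dg (a,b) (x,y) = ~~ Dg (x,b) (a,y)) ->
  symmetric e -> symmetric f -> irreflexive f ->
  (forall s : seq U, uniq s -> (2 < size s)%N -> ~~ cycle f s) ->
  symmetric Dg -> (forall p q, d p q = d q p) ->
  (forall a x b y, e a x -> f b y -> Dg (a,b) (x,y) ->
     d (a,b) (x,y) = pL a b (x,b) + pL a b (a,y) - pL a b (a,b) - pL a b (x,y)) ->
  (forall a x c, e a x -> HS f Dg a x c (pL a c) = HS f Dg a x c (pL x c)) ->
  exists phi : T * U -> int, forall a x b y, e a x -> f b y -> Dg (a,b) (x,y) ->
     d (a,b) (x,y) = phi (x,b) + phi (a,y) - phi (a,b) - phi (x,y).
Proof.
move=> Dfl es fs fi facyc Ds dsym hdiag hhor.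
pose S (z : T) (c : U) := \sum_(p : U * U | f p.1 p.2 && posr p.1 p.2)
   (c \in Cs f p.1 p.2)%:R * Gf f pL p.1 p.2 z.
exists (fun q => - S q.1 q.2) => a x b0 y0 eax fby hD /=.
pose K (p : U * U) : int := (y0 \in Cs f p.1 p.2)%:R - (b0 \in Cs f p.1 p.2)%:R.
have lin : \sum_(p : U * U | f p.1 p.2 && posr p.1 p.2) K p * (Gf f pL p.1 p.2 a - Gf f pL p.1 p.2 x)
    = S a y0 - S x y0 - S a b0 + S x b0.
  rewrite /S -!sumrB -big_split /=; apply: eq_bigr => p _; rewrite /K; ring.
have rest : forall p : U * U, f p.1 p.2 -> ~~ (((p.1 == b0) && (p.2 == y0)) || ((p.1 == y0) && (p.2 == b0))) ->
    K p = 0.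
  by move=> p _ H; rewrite /K !inE (sameside _ fs fby H) subrr.
have nyb : (y0 == b0) = false by apply/negbTE; apply: contraTneq fby => ->; rewrite fi.
have nby : (b0 == y0) = false by rewrite eq_sym.
have fyb : f y0 b0 by rewrite fs.
have Wb := Wanti Dfl fs Ds dsym eax fby.
have main : \sum_(p : U * U | f p.1 p.2 && posr p.1 p.2) K p * (Gf f pL p.1 p.2 a - Gf f pL p.1 p.2 x)
    = - wf Dg d b0 y0 a x.
  case: (boolP (posr b0 y0)) => pos.
  - rewrite (bigD1 (b0,y0)) /=; last by rewrite fby pos.
    rewrite big1 ?addr0.
      rewrite (H2 Dfl es fs fi facyc Ds dsym hdiag hhor fby eax) Wb /K !inE connect0.
      by rewrite (negbTE (notinC fi facyc fby)) mul1r.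
    move=> p /andP[/andP[fp pp] pn]; rewrite rest ?mul0r //.
    apply/negP => /orP[] /andP[/eqP e1 /eqP e2].
      by move: pn; rewrite -e1 -e2 -surjective_pairing eqxx.
    by move: pp pos; rewrite e1 e2 /posr => /ltnW; rewrite leqNgt => /negbTE ->.
  - have pos' : posr y0 b0.
      move: pos; rewrite /posr -leqNgt leq_eqVlt => /orP[/eqP E|//].
      by move: nby; rewrite (enum_rank_inj (ord_inj E)) eqxx.
    rewrite (bigD1 (y0,b0)) /=; last by rewrite fyb pos'.
    rewrite big1 ?addr0.
      rewrite (H2 Dfl es fs fi facyc Ds dsym hdiag hhor fyb eax) /K !inE connect0.
      by rewrite (negbTE (notinC fi facyc fyb)) sub0r mulN1r.
    move=> p /andP[/andP[fp pp] pn]; rewrite rest ?mul0r //.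
    apply/negP => /orP[] /andP[/eqP e1 /eqP e2]; last first.
      by move: pn; rewrite -e1 -e2 -surjective_pairing eqxx.
    by move: pp pos; rewrite e1 e2 /posr => ->.
have wd : wf Dg d b0 y0 a x = d (a,b0) (x,y0) by rewrite /wf hD.
have := main; rewrite lin wd => E.
lia.
Qed.


Lemma Div_sub (T U : finType) (e : rel T) (f : rel U) (Dg : rel (T * U)) p q r :
  Div e f Dg (fun w => p w - q w) r = Div e f Dg p r - Div e f Dg q r.
Proof.
rewrite /Div; case: ifP => _; last by rewrite subr0.
under eq_bigr => s _ do rewrite sumrB.
under [X in _ - X]eq_bigr => u _ do rewrite mulrBr.
rewrite !sumrB; ring.
Qed.

Lemma finish (T U : finType) (e : rel T) (f : rel U) (Dg : rel (T * U)) D (phiL : T * U -> T * U -> int) phi :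
  triangulation e f Dg -> simple_graph e -> simple_graph f ->
  is_divisor e f Dg D ->
  (forall v r, is_edge e f Dg r -> v \in r -> D r = Div e f Dg (phiL v) r) ->
  (forall a x b y, e a x -> f b y -> Dg (a,b) (x,y) ->
     D [set (a,b); (x,y)] = phi (x,b) + phi (a,y) - phi (a,b) - phi (x,y)) ->
  exists D' : {set T * U} -> int,
      [/\ is_divisor e f Dg D', cartier e f Dg D',
          lin_equiv e f Dg D D' & vanishes_on_diagonals Dg D'].
Proof.
move=> ht he hf hD hC hphi.
exists (fun r => D r - Div e f Dg phi r); split.
- move=> r nr; rewrite hD // /Div (negbTE nr) subr0 //.
- move=> v; exists (fun w => phiL v w - phi w) => r er vr.
  by rewrite Div_sub (hC v r er vr).
- by exists phi => r; rewrite opprB addrC subrK.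
- move=> r /existsP [[a b] /existsP [[x y] /andP [hDg /eqP ->]]].
  have [_ Dgef _] := ht.
  case/andP: (Dgef _ _ hDg) => /= eax fby.
  by rewrite (hphi _ _ _ _ eax fby hDg) (Div_diagval phi he hf ht eax fby hDg) subrr.
Qed.

Theorem mainTheorem8 (T U : finType) (e : rel T) (f : rel U) (Dg : rel (T * U)) :
  simple_graph e -> simple_graph f ->
  ((connected_graph e /\ tree f) \/ (tree e /\ connected_graph f)) ->
  triangulation e f Dg ->
  forall D : {set T * U} -> int,
    is_divisor e f Dg D -> cartier e f Dg D ->
    exists D' : {set T * U} -> int,
      [/\ is_divisor e f Dg D', cartier e f Dg D',
          lin_equiv e f Dg D D' & vanishes_on_diagonals Dg D'].
Proof.
move=> he hf htr ht D hD hC.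
pose phiL v := proj1_sig (constructive_indefinite_description _ (hC v)).
have hCL : forall v r, is_edge e f Dg r -> v \in r -> D r = Div e f Dg (phiL v) r.
  by move=> v r; rewrite /phiL; case: (constructive_indefinite_description _ _) => /= p Hp; exact: Hp.
have [es ei] := he; have [fs fi] := hf; have [Ds Dgef Dfl] := ht.
suff [phi Hphi] : exists phi : T * U -> int, forall a x b y, e a x -> f b y -> Dg (a,b) (x,y) ->
     D [set (a,b); (x,y)] = phi (x,b) + phi (a,y) - phi (a,b) - phi (x,y).
  exact: finish ht he hf hD hCL Hphi.
have dsym : forall (p q : T * U), D [set p; q] = D [set q; p] by move=> p q; rewrite setUC.
case: htr => [[_ [_ facyc]]|[[_ facyc] _]].
- apply: (core (d := fun p q => D [set p; q]) (pL := fun a c => phiL (a,c)) Dfl es fs fi facyc Ds dsym).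
  + move=> a x b y eax fby hDg.
    rewrite (hCL (a,b)); last by rewrite !inE eqxx.
      by rewrite (Div_diagval _ he hf ht eax fby hDg).
    by apply: edge_adj; rewrite /adjD hDg !orbT.
  + move=> a x c eax; rewrite /HS.
    have er : is_edge e f Dg [set (a,c); (x,c)] by apply: edge_adj; rewrite /adjD /= eqxx eax.
    rewrite -(Div_horiz _ _ he hf ht eax) -(Div_horiz _ _ he hf ht eax).
    rewrite -(hCL (a,c)) ?inE ?eqxx // -(hCL (x,c)) // !inE eqxx orbT //.
- have Dfl' : forall b y a x, f b y -> e a x ->
     Dg (a,b) (x,y) = ~~ Dg (a,y) (x,b).
    move=> b y a x fby eax; have fyb : f y b by rewrite fs.
    by rewrite (Dfl _ _ _ _ eax fyb) (Ds (x,y)) negbK.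
  have hd' : forall b y a x, f b y -> e a x -> Dg (a,b) (x,y) ->
      D [set (a,b); (x,y)] = phiL (a,b) (a,y) + phiL (a,b) (x,b) - phiL (a,b) (a,b) - phiL (a,b) (x,y).
    move=> b y a x fby eax hDg /=.
    rewrite (hCL (a,b)); last by rewrite !inE eqxx.
      by rewrite (Div_diagval _ he hf ht eax fby hDg) /=; ring.
    by apply: edge_adj; rewrite /adjD hDg !orbT.
  have hh' : forall b y c, f b y ->
      HS e (fun p q => Dg (p.2,p.1) (q.2,q.1)) b y c (fun q => phiL (c,b) (q.2,q.1)) =
      HS e (fun p q => Dg (p.2,p.1) (q.2,q.1)) b y c (fun q => phiL (c,y) (q.2,q.1)).
    move=> b y c fby; rewrite /HS /=.
    have er : is_edge e f Dg [set (c,b); (c,y)] by apply: edge_adj; rewrite /adjD /= eqxx fby orbT.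
    rewrite -(Div_vert _ _ he hf ht fby) -(Div_vert _ _ he hf ht fby).
    rewrite -(hCL (c,b)) ?inE ?eqxx // -(hCL (c,y)) // !inE eqxx orbT //.
  have [phi' Hphi] := core (e := f) (f := e) (Dg := fun p q => Dg (p.2,p.1) (q.2,q.1))
     (d := fun p q => D [set (p.2,p.1); (q.2,q.1)])
     (pL := fun b a q => phiL (a,b) (q.2,q.1)) Dfl' fs es ei facyc
     (fun p q => Ds _ _) (fun p q => dsym _ _) hd' hh'.
  exists (fun q => phi' (q.2,q.1)) => a x b y eax fby hDg /=.
  rewrite (Hphi b y a x fby eax hDg) /=; ring.
Qed.
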